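(* Let $G=GL(\infty,F_2)\ltimes F_2^\infty$. The only normal subgroups of $G$ are $\{e\}$, $F_2^\infty$ and $G$.
   Context: $F_2$ is the field with two elements and $F_2^\infty=\bigoplus_{\mathbb N}F_2$ is the space of finitely supported column vectors (standard basis $e_1,e_2,\dots$), regarded as an abelian group under addition. $GL(\infty,F_2)$ is the group of invertible $\mathbb N\times\mathbb N$ matrices $M$ over $F_2$ with $M_{ij}\neq\delta_{ij}$ for only finitely many $(i,j)$, acting on $F_2^\infty$ by matrix multiplication. $G=GL(\infty,F_2)\ltimes F_2^\infty$ is the semidirect product with $gvg^{-1}=g(v)$ (this group is isomorphic to $\mathrm{Aut}_{\mathrm{fin}}(\mathbb Z_2^\infty)\ltimes\mathbb Z_2^\infty$). *)

(* Defs.v *)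
From HB Require Import structures.
From mathcomp Require Import all_boot all_order all_algebra.
From mathcomp Require Import boolp classical_sets functions cardinality fsbigop.
Set Implicit Arguments. Unset Strict Implicit. Unset Printing Implicit Defensive.
Import GRing.Theory.
Local Open Scope classical_set_scope.
Local Open Scope ring_scope.

Notation F2 := 'F_2.

(* N x N matrices and column vectors over F_2 (indices start at 0). *)
Definition infmx := nat -> nat -> F2.
Definition infvec := nat -> F2.

Definition mx1 : infmx := fun i j => (i == j)%:R.

Definition finitary (M : infmx) : Prop :=
  finite_set [set ij : nat * nat | M ij.1 ij.2 != mx1 ij.1 ij.2].

Definition finsupp (v : infvec) : Prop := finite_set [set i | v i != 0].

Definition mxmul (A B : infmx) : infmx :=
  fun i j => \sum_(k \in [set: nat]) A i k * B k j.
Definition mxact (A : infmx) (v : infvec) : infvec :=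
  fun i => \sum_(k \in [set: nat]) A i k * v k.
Definition vadd (v w : infvec) : infvec := fun i => v i + w i.
Definition v0 : infvec := fun _ => 0.

Definition GLinf (M : infmx) : Prop :=
  finitary M /\ exists M', finitary M' /\ mxmul M M' = mx1 /\ mxmul M' M = mx1.

(* G = GL(infinity,F_2) |x F_2^infinity; the element (M, v) stands for v.M,
   so that (M,v)(M',v') = v M v' M' = v (M v' M^-1) M M' = (M M', v + M v'). *)
Definition Gt := (infmx * infvec)%type.
Definition inG (g : Gt) : Prop := GLinf g.1 /\ finsupp g.2.
Definition Gmul (g h : Gt) : Gt := (mxmul g.1 h.1, vadd g.2 (mxact g.1 h.2)).
Definition Ge : Gt := (mx1, v0).

(* Normal subgroups of G (inverses expressed through the group law). *)
Definition normal_subgroup (N : set Gt) : Prop :=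
  [/\ N `<=` inG, N Ge,
      (forall a b, N a -> N b -> N (Gmul a b)),
      (forall a b, N a -> inG b -> Gmul a b = Ge -> N b) &
      (forall a g h, N a -> inG g -> inG h -> Gmul g h = Ge ->
                      N (Gmul (Gmul g a) h))].

Definition Vsub : set Gt := [set g | inG g /\ g.1 = mx1].

(* Main.v *)
Require Import Defs.
From HB Require Import structures.
From mathcomp Require Import all_boot all_order all_algebra.
From mathcomp Require Import boolp classical_sets functions cardinality fsbigop.
Set Implicit Arguments. Unset Strict Implicit. Unset Printing Implicit Defensive.
Import GRing.Theory.
Local Open Scope classical_set_scope.
Local Open Scope ring_scope.

Lemma F2_01 (x : F2) : x = 0 \/ x = 1.
Proof. case: x => [[|[|n]] Hn]; [left|right|by []]; exact/val_inj. Qed.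

Lemma F2_addxx (x : F2) : x + x = 0.
Proof. by case: (F2_01 x) => ->; apply/val_inj. Qed.

Lemma fsum_bound (F : nat -> F2) m : (forall k, (m <= k)%N -> F k = 0) ->
  \sum_(k \in [set: nat]) F k = \sum_(k < m) F k.
Proof.
move=> HF.
rewrite fsbig_supp (fsbig_widen _ [set` iota 0 m]).
- by rewrite -fsbig_seq ?iota_uniq // -(big_mkord xpredT) /index_iota subn0.
- move=> k [_ /= Fk]; rewrite mem_iota add0n /=; apply: contraPT Fk; rewrite -leqNgt => /HF ->. by [].
- move=> k [_ /=]; move/not_andP=> [//|]. by move/contrapT.
Qed.

Definition bnd m (A : infmx) := forall i j, (m <= i)%N \/ (m <= j)%N -> A i j = mx1 i j.
Definition vbnd m (v : infvec) := forall k, (m <= k)%N -> v k = 0.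

Lemma mx1E i j : mx1 i j = (i == j)%:R. Proof. by []. Qed.
Lemma mx1_neq i j : i != j -> mx1 i j = 0. Proof. by rewrite mx1E => /negbTE ->. Qed.
Lemma mx1_eq i : mx1 i i = 1. Proof. by rewrite mx1E eqxx. Qed.

Lemma bnd_mono m m' A : (m <= m')%N -> bnd m A -> bnd m' A.
Proof. move=> le H i j [h|h]; apply: H; [left|right]; exact: leq_trans h. Qed.
Lemma vbnd_mono m m' v : (m <= m')%N -> vbnd m v -> vbnd m' v.
Proof. move=> le H k h; apply: H; exact: leq_trans h. Qed.

Lemma finitary_bnd A : finitary A -> exists m, bnd m A.
Proof.
move=> /finite_seqP [s Hs].
exists (\max_(x <- s) maxn x.1 x.2).+1 => i j Hij.
apply/eqP; apply: contraT => Hne.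
have : (i, j) \in s.
  have : [set ij : nat * nat | A ij.1 ij.2 != mx1 ij.1 ij.2] (i, j) by [].
  by rewrite Hs.
move=> /(leq_bigmax_seq (P := xpredT) (F := fun x : nat * nat => maxn x.1 x.2)) /(_ isT) /= H.
have Hi : (i < (\max_(x <- s) maxn x.1 x.2).+1)%N by rewrite ltnS; apply: leq_trans H; rewrite leq_maxl.
have Hj : (j < (\max_(x <- s) maxn x.1 x.2).+1)%N by rewrite ltnS; apply: leq_trans H; rewrite leq_maxr.
by case: Hij; rewrite leqNgt ?Hi ?Hj.
Qed.

Lemma bnd_finitary m A : bnd m A -> finitary A.
Proof.
move=> H; apply: (sub_finite_set (B := [set` [seq (i, j) | i <- iota 0 m, j <- iota 0 m]])).
  move=> [i j] /= Hne; apply/allpairsP; exists (i, j) => /=; split => //;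
  rewrite mem_iota add0n /= ltnNge; apply/negP => h; move/eqP: Hne; apply; apply: H; by [left|right].
exact: finite_seq.
Qed.

Lemma finsupp_vbnd v : finsupp v -> exists m, vbnd m v.
Proof.
move=> /finite_seqP [s Hs].
exists (\max_(x <- s) x).+1 => k Hk.
apply/eqP; apply: contraT => Hne.
have : k \in s.
  have : [set i | v i != 0] k by [].
  by rewrite Hs.
move=> /(leq_bigmax_seq (P := xpredT) (F := id)) /(_ isT) /= H.
by move: Hk; rewrite leqNgt ltnS H.
Qed.

Lemma vbnd_finsupp m v : vbnd m v -> finsupp v.
Proof.
move=> H; apply: (sub_finite_set (B := [set` iota 0 m])); last exact: finite_seq.
move=> k /= Hne; rewrite mem_iota add0n /= ltnNge; apply/negP => h; move/eqP: Hne; apply; exact: H.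
Qed.

Lemma sum_single m i (F : nat -> F2) : (i < m)%N -> (forall k, k != i -> F k = 0) ->
  \sum_(k < m) F k = F i.
Proof.
move=> Hi HF; rewrite (bigD1 (Ordinal Hi)) //= big1 ?addr0 // => k Hk; apply: HF.
by move: Hk; apply: contra => /eqP e; apply/eqP/val_inj.
Qed.

Lemma fsum_single i (F : nat -> F2) : (forall k, k != i -> F k = 0) ->
  \sum_(k \in [set: nat]) F k = F i.
Proof.
move=> HF; rewrite (fsum_bound (m := i.+1)); first exact: sum_single.
move=> k Hk; apply: HF; by rewrite neq_ltn Hk orbT.
Qed.

Lemma fsum_pair i b (F : nat -> F2) : i != b -> (forall k, k != i -> k != b -> F k = 0) ->
  \sum_(k \in [set: nat]) F k = F i + F b.
Proof.
move=> ib HF; rewrite (fsum_bound (m := (maxn i b).+1)).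
  have Hi : (i < (maxn i b).+1)%N by rewrite ltnS leq_maxl.
  have Hb : (b < (maxn i b).+1)%N by rewrite ltnS leq_maxr.
  rewrite (bigD1 (Ordinal Hi)) //= (bigD1 (Ordinal Hb)) /=; last by rewrite -(inj_eq val_inj) /= eq_sym.
  rewrite big1 ?addr0 // => k /andP [H1 H2]; apply: HF.
    by move: H1; apply: contra => /eqP e; apply/eqP/val_inj.
  by move: H2; apply: contra => /eqP e; apply/eqP/val_inj.
move=> k Hk; apply: HF; rewrite neq_ltn; apply/orP; right; apply: leq_trans Hk;
  by rewrite ltnS ?leq_maxl ?leq_maxr.
Qed.

Lemma mxmul_1l A : mxmul mx1 A = A.
Proof.
apply/funext => i; apply/funext => j; rewrite /mxmul (fsum_single (i := i)).
  by rewrite mx1_eq mul1r.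
by move=> k Hk; rewrite mx1_neq ?mul0r // eq_sym.
Qed.

Lemma mxmul_1r A : mxmul A mx1 = A.
Proof.
apply/funext => i; apply/funext => j; rewrite /mxmul (fsum_single (i := j)).
  by rewrite mx1_eq mulr1.
by move=> k Hk; rewrite mx1_neq ?mulr0.
Qed.

Lemma mxact_1 v : mxact mx1 v = v.
Proof.
apply/funext => i; rewrite /mxact (fsum_single (i := i)).
  by rewrite mx1_eq mul1r.
by move=> k Hk; rewrite mx1_neq ?mul0r // eq_sym.
Qed.

Lemma mxact_0 A : mxact A v0 = v0.
Proof. by apply/funext => i; rewrite /mxact fsbig1 // => k _; rewrite mulr0. Qed.

Lemma bnd_lt m A i k : bnd m A -> (i < m)%N -> (m <= k)%N -> A i k = 0.
Proof.
move=> H Hi Hk; rewrite H ?mx1_neq //; last by right.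
by rewrite neq_ltn (leq_trans Hi Hk).
Qed.

Lemma bnd_gt m A i k : bnd m A -> (m <= i)%N -> (k < m)%N -> A i k = 0.
Proof.
move=> H Hi Hk; rewrite H ?mx1_neq //; last by left.
by rewrite neq_ltn (leq_trans Hk Hi) orbT.
Qed.

Lemma mxmulE m A B i j : bnd m A -> bnd m B -> (i < m)%N ->
  mxmul A B i j = \sum_(k < m) A i k * B k j.
Proof.
move=> HA HB Hi; rewrite /mxmul (fsum_bound (m := m)) // => k Hk.
by rewrite (bnd_lt HA Hi Hk) mul0r.
Qed.

Lemma mxmul_bnd m A B : bnd m A -> bnd m B -> bnd m (mxmul A B).
Proof.
move=> HA HB i j [Hi|Hj].
  rewrite /mxmul (fsum_single (i := i)).
    by rewrite HA ?mx1_eq ?mul1r; [apply: HB; left|left].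
  by move=> k Hk; rewrite HA ?mx1_neq ?mul0r 1?eq_sym //; left.
case: (ltnP i m) => Hi; last first.
  rewrite /mxmul (fsum_single (i := i)).
    by rewrite HA ?mx1_eq ?mul1r; [apply: HB; right|left].
  by move=> k Hk; rewrite HA ?mx1_neq ?mul0r 1?eq_sym //; left.
rewrite (mxmulE _ HA HB Hi) big1.
  by rewrite mx1_neq // neq_ltn (leq_trans Hi Hj).
move=> k _; rewrite (bnd_gt (A := fun a b => B b a) (m := m)) ?mulr0 //.
move=> a b h; rewrite HB; [by rewrite !mx1E eq_sym | by case: h; [right|left]].
Qed.

Lemma mxactE m A v i : bnd m A -> vbnd m v -> (i < m)%N ->
  mxact A v i = \sum_(k < m) A i k * v k.
Proof.
move=> HA Hv Hi; rewrite /mxact (fsum_bound (m := m)) // => k Hk.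
by rewrite (bnd_lt HA Hi Hk) mul0r.
Qed.

Lemma mxact_vbnd m A v : bnd m A -> vbnd m v -> vbnd m (mxact A v).
Proof.
move=> HA Hv i Hi; rewrite /mxact fsbig1 // => k _.
case: (eqVneq k i) => [->|ne]; first by rewrite (Hv _ Hi) mulr0.
by rewrite HA ?mx1_neq ?mul0r 1?eq_sym //; left.
Qed.

Lemma mxmulA m A B C : bnd m A -> bnd m B -> bnd m C ->
  mxmul (mxmul A B) C = mxmul A (mxmul B C).
Proof.
move=> HA HB HC; have HAB := mxmul_bnd HA HB; have HBC := mxmul_bnd HB HC.
apply/funext => i; apply/funext => j.
case: (ltnP i m) => Hi; last by rewrite (mxmul_bnd HAB HC (or_introl Hi)) (mxmul_bnd HA HBC (or_introl Hi)).
case: (ltnP j m) => Hj; last by rewrite (mxmul_bnd HAB HC (or_intror Hj)) (mxmul_bnd HA HBC (or_intror Hj)).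
rewrite (mxmulE _ HAB HC Hi) (mxmulE _ HA HBC Hi).
under eq_bigr => k _ do rewrite (mxmulE _ HA HB Hi) mulr_suml.
under [RHS]eq_bigr => k _ do rewrite (mxmulE _ HB HC (ltn_ord k)) mulr_sumr.
rewrite exchange_big /=; apply: eq_bigr => k _; apply: eq_bigr => l _.
by rewrite mulrA.
Qed.

Lemma mxactA m A B v : bnd m A -> bnd m B -> vbnd m v ->
  mxact (mxmul A B) v = mxact A (mxact B v).
Proof.
move=> HA HB Hv; have HAB := mxmul_bnd HA HB; have HBv := mxact_vbnd HB Hv.
apply/funext => i.
case: (ltnP i m) => Hi; last by rewrite (mxact_vbnd HAB Hv) ?(mxact_vbnd HA HBv).
rewrite (mxactE HAB Hv Hi) (mxactE HA HBv Hi).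
under eq_bigr => k _ do rewrite (mxmulE _ HA HB Hi) mulr_suml.
under [RHS]eq_bigr => k _ do rewrite (mxactE HB Hv (ltn_ord k)) mulr_sumr.
rewrite exchange_big /=; apply: eq_bigr => k _; apply: eq_bigr => l _.
by rewrite mulrA.
Qed.

Lemma mxactD m A v w : bnd m A -> vbnd m v -> vbnd m w ->
  mxact A (vadd v w) = vadd (mxact A v) (mxact A w).
Proof.
move=> HA Hv Hw; have Hvw : vbnd m (vadd v w) by move=> k Hk; rewrite /vadd Hv ?Hw ?addr0.
apply/funext => i; rewrite /vadd.
case: (ltnP i m) => Hi; last by rewrite !(mxact_vbnd HA) ?addr0.
rewrite !(mxactE HA _ Hi) // -big_split /=; apply: eq_bigr => k _.
by rewrite /vadd mulrDr.
Qed.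

Definition ev (a : nat) : infvec := fun i => (i == a)%:R.
Definition tv (u : infvec) (q : nat) : infmx := fun i j => mx1 i j + u i * (j == q)%:R.

Lemma tvL u q A : mxmul (tv u q) A = fun i j => A i j + u i * A q j.
Proof.
apply/funext => i; apply/funext => j; rewrite /mxmul /tv.
case: (eqVneq i q) => [->|iq].
  rewrite (fsum_single (i := q)); first by rewrite mx1_eq eqxx mulr1 mulrDl mul1r.
  move=> k kq; rewrite mx1_neq; last by rewrite eq_sym.
  by rewrite (negbTE kq) mulr0 addr0 mul0r.
rewrite (fsum_pair iq); last first.
  move=> k ki kq; rewrite mx1_neq; last by rewrite eq_sym.
  by rewrite (negbTE kq) mulr0 addr0 mul0r.
by rewrite mx1_eq (negbTE iq) mulr0 addr0 mul1r eqxx mulr1 mx1_neq // add0r.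
Qed.

Lemma tvR A a b : mxmul A (tv (ev a) b) = fun i j => A i j + A i a * (j == b)%:R.
Proof.
apply/funext => i; apply/funext => j; rewrite /mxmul /tv /ev.
case: (eqVneq j a) => [->|ja].
  rewrite (fsum_single (i := a)); first by rewrite mx1_eq eqxx mul1r mulrDr mulr1.
  by move=> k ka; rewrite mx1_neq // (negbTE ka) mul0r addr0 mulr0.
rewrite (fsum_pair ja); last first.
  by move=> k kj ka; rewrite mx1_neq // (negbTE ka) mul0r addr0 mulr0.
by rewrite mx1_eq (negbTE ja) mul0r addr0 mulr1 eqxx mul1r mx1_neq 1?eq_sym // add0r.
Qed.

Lemma mxact_tv u q v : mxact (tv u q) v = fun i => v i + u i * v q.
Proof.
apply/funext => i; rewrite /mxact /tv.
case: (eqVneq i q) => [->|iq].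
  rewrite (fsum_single (i := q)); first by rewrite mx1_eq eqxx mulr1 mulrDl mul1r.
  move=> k kq; rewrite mx1_neq; last by rewrite eq_sym.
  by rewrite (negbTE kq) mulr0 addr0 mul0r.
rewrite (fsum_pair iq); last first.
  move=> k ki kq; rewrite mx1_neq; last by rewrite eq_sym.
  by rewrite (negbTE kq) mulr0 addr0 mul0r.
by rewrite mx1_eq (negbTE iq) mulr0 addr0 mul1r eqxx mulr1 mx1_neq // add0r.
Qed.

Lemma mxact_ev A a : mxact A (ev a) = fun i => A i a.
Proof.
apply/funext => i; rewrite /mxact /ev (fsum_single (i := a)); first by rewrite eqxx mulr1.
by move=> k /negbTE ->; rewrite mulr0.
Qed.

Lemma tv_bnd m u q : vbnd m u -> (q < m)%N -> bnd m (tv u q).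
Proof.
move=> Hu Hq i j [Hi|Hj]; rewrite /tv; first by rewrite Hu // mul0r addr0.
by rewrite [(j == q)]eqn_leq [(j <= q)%N]leqNgt (leq_trans Hq Hj) /= mulr0 addr0.
Qed.

Lemma ev_vbnd a : vbnd a.+1 (ev a).
Proof. by move=> k Hk; rewrite /ev; case: eqP Hk => // ->; rewrite ltnn. Qed.

Lemma tv_invol u q : u q = 0 -> mxmul (tv u q) (tv u q) = mx1.
Proof.
move=> Huq; rewrite tvL; apply/funext => i; apply/funext => j; rewrite /tv Huq mul0r addr0.
by rewrite [mx1 q j]mx1E eq_sym -addrA -mulrDr F2_addxx mulr0 addr0.
Qed.

Lemma vadd0v v : vadd v0 v = v. Proof. by apply/funext => i; rewrite /vadd /v0 add0r. Qed.
Lemma vaddv0 v : vadd v v0 = v. Proof. by apply/funext => i; rewrite /vadd /v0 addr0. Qed.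
Lemma vaddvv v : vadd v v = v0. Proof. by apply/funext => i; rewrite /vadd /v0 F2_addxx. Qed.

Lemma bnd0_mx1 : bnd 0 mx1. Proof. by []. Qed.
Lemma vbnd0 m : vbnd m v0. Proof. by []. Qed.

Lemma GLinf_bnd M : GLinf M -> exists m M', [/\ bnd m M, bnd m M', mxmul M M' = mx1 & mxmul M' M = mx1].
Proof.
move=> [/finitary_bnd [m1 H1] [M' [/finitary_bnd [m2 H2] [E1 E2]]]].
exists (maxn m1 m2), M'; split => //.
  exact: bnd_mono (leq_maxl _ _) H1.
exact: bnd_mono (leq_maxr _ _) H2.
Qed.

Lemma inG_tv m u q : vbnd m u -> (q < m)%N -> u q = 0 -> inG (tv u q, v0).
Proof.
move=> Hu Hq Huq; split => /=; last exact: (vbnd_finsupp (m := 0)).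
have Hb := tv_bnd Hu Hq.
split; first exact: bnd_finitary Hb.
by exists (tv u q); split; [exact: bnd_finitary Hb| rewrite tv_invol].
Qed.

Lemma inG_1v v : finsupp v -> inG (mx1, v).
Proof.
move=> Hv; split => //=; split; first exact: (bnd_finitary bnd0_mx1).
by exists mx1; split; [exact: (bnd_finitary bnd0_mx1)| rewrite mxmul_1l].
Qed.

Lemma inG_M0 M : GLinf M -> inG (M, v0).
Proof. by move=> H; split => //; exact: (vbnd_finsupp (m := 0)). Qed.

Lemma ev_neq a b : a != b -> ev a b = 0.
Proof. by rewrite /ev eq_sym => /negbTE ->. Qed.

Lemma ev_eq a : ev a a = 1.
Proof. by rewrite /ev eqxx. Qed.

Section Normal.
End Normal.

Lemma N_ev (N : set Gt) (HN : normal_subgroup N) w b a :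
  finsupp w -> N (mx1, w) -> w b = 1 -> a != b -> N (mx1, ev a).
Proof.
case: HN => Nsub Ne Nmul Ninv Nconj Hw Nw wb ab.
have [m Hm] := finsupp_vbnd Hw.
pose T := tv (ev a) b.
have Hab : ev a b = 0 by exact: ev_neq.
have HT : inG (T, v0).
  apply: (inG_tv (m := (maxn a b).+1)) => //; last by rewrite ltnS leq_maxr.
  have Hle : (a.+1 <= (maxn a b).+1)%N by rewrite ltnS leq_maxl.
  exact: (vbnd_mono Hle (@ev_vbnd a)).
have HTT : Gmul (T, v0) (T, v0) = Ge by rewrite /Gmul /= tv_invol // mxact_0 vaddvv.
have := Nconj _ _ _ Nw HT HT HTT.
rewrite /Gmul /= mxmul_1r tv_invol // mxact_0 vaddv0 vadd0v => N1.
have := Nmul _ _ N1 Nw; rewrite /Gmul /= mxmul_1l mxact_1.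
congr (N (_, _)); apply/funext => i; rewrite /vadd mxact_tv wb mulr1.
by rewrite addrC addrA F2_addxx add0r.
Qed.

Lemma nz_vec (w : infvec) : w != v0 -> exists b, w b = 1.
Proof.
move=> Hw; case: (pselect (exists b, w b = 1)) => // H; exfalso.
move/eqP: Hw; apply; apply/funext => b.
case: (F2_01 (w b)) => // E; exfalso; apply: H; by exists b.
Qed.

Lemma N_allev (N : set Gt) (HN : normal_subgroup N) w c :
  finsupp w -> N (mx1, w) -> w != v0 -> N (mx1, ev c).
Proof.
move=> Hw Nw /nz_vec [b wb].
case: (eqVneq c b) => [->|cb]; last exact: N_ev Nw wb cb.
have ab : b.+1 != b by rewrite neq_ltn ltnSn orbT.
have N1 := N_ev HN Hw Nw wb ab.
apply: (N_ev HN _ N1 (ev_eq _)); first exact: vbnd_finsupp (@ev_vbnd b.+1).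
by rewrite eq_sym.
Qed.

Lemma N_V (N : set Gt) (HN : normal_subgroup N) w :
  finsupp w -> N (mx1, w) -> w != v0 -> Vsub `<=` N.
Proof.
move=> Hw Nw nz.
have Hev c := N_allev HN c Hw Nw nz.
have Hall : forall m v, vbnd m v -> N (mx1, v).
  elim=> [|m IH] v Hv.
    have -> : v = v0 by apply/funext => k; exact: Hv.
    by case: HN.
  pose v' := fun i => if i == m then 0 else v i.
  have Hv' : vbnd m v'.
    move=> k Hk; rewrite /v'; case: eqP => // km; apply: Hv.
    by rewrite ltn_neqAle Hk andbT; apply/eqP => e; apply: km.
  have N' := IH _ Hv'.
  case: (F2_01 (v m)) => vm.
    suff -> : v = v' by [].
    apply/funext => k; rewrite /v'; case: eqP => // ->; exact: vm.
  case: HN => _ _ Nmul _ _.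
  have := Nmul _ _ N' (Hev m); rewrite /Gmul /= mxmul_1l mxact_1.
  congr (N (_, _)); apply/funext => k; rewrite /vadd /v' /ev.
  by case: eqP => [->|]; rewrite ?vm ?add0r ?addr0.
move=> [M v] [[HG Hf] /= HM]; subst M.
have [m Hm] := finsupp_vbnd Hf; exact: Hall Hm.
Qed.

Lemma F2_c1 (x y z : F2) : y + z = x + ((y + x) + z).
Proof. by case: (F2_01 x) => ->; case: (F2_01 y) => ->; case: (F2_01 z) => ->; apply/val_inj. Qed.

Lemma F2_add_eq0 (x y : F2) : x + y = 0 -> x = y.
Proof. by move=> H; rewrite -[y]add0r -(F2_addxx x) -addrA H addr0. Qed.

Lemma neq_mx1 (M : infmx) : M <> mx1 -> exists i j, M i j <> mx1 i j.
Proof.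
move=> H; case: (pselect (exists i j, M i j <> mx1 i j)) => // H'; exfalso; apply: H.
apply/funext => i; apply/funext => j; apply: contrapT => E; apply: H'; by exists i, j.
Qed.

Lemma N_vec (N : set Gt) (HN : normal_subgroup N) M v :
  N (M, v) -> M <> mx1 -> exists w, [/\ finsupp w, N (mx1, w) & w != v0].
Proof.
move=> NMv /neq_mx1 [i0 [j Hij]].
have HNc := HN; case: HNc => Nsub Ne Nmul Ninv Nconj.
have [HG Hv] := Nsub _ NMv; rewrite /= in HG Hv.
have [m [M' [HM HM' E1 E2]]] := GLinf_bnd HG.
have [m1 Hv1] := finsupp_vbnd Hv.
pose n := maxn (maxn m m1) j.+1.
have Hn1 : (m <= n)%N by rewrite /n (leq_trans (leq_maxl m m1)) ?leq_maxl.
have Hn2 : (m1 <= n)%N by rewrite /n (leq_trans (leq_maxr m m1)) ?leq_maxl.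
have Hn3 : (j.+1 <= n)%N by rewrite /n leq_maxr.
have bM := bnd_mono Hn1 HM; have bM' := bnd_mono Hn1 HM'.
have bv := vbnd_mono Hn2 Hv1; have bj := vbnd_mono Hn3 (@ev_vbnd j).
have bM'v := mxact_vbnd bM' bv.
have Hb : inG (M', mxact M' v).
  split => /=; last exact: vbnd_finsupp bM'v.
  split; first exact: bnd_finitary bM'.
  by exists M; split => //; exact: bnd_finitary bM.
have Nb : N (M', mxact M' v).
  apply: Ninv NMv Hb _; rewrite /Gmul /= E1 -(mxactA bM bM' bv) E1 mxact_1 vaddvv.
  by [].
have Hg : inG (mx1, ev j) by apply: inG_1v; exact: vbnd_finsupp bj.
have Hgg : Gmul (mx1, ev j) (mx1, ev j) = Ge by rewrite /Gmul /= mxmul_1l mxact_1 vaddvv.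
have := Nconj _ _ _ NMv Hg Hg Hgg.
rewrite /Gmul /= mxmul_1l mxmul_1r mxact_1 => N2.
have := Nmul _ _ Nb N2; rewrite /Gmul /= E2 => N3.
have bMj := mxact_vbnd bM bj.
have bjv : vbnd n (vadd (ev j) v) by move=> k Hk; rewrite /vadd bj ?bv ?addr0.
rewrite (mxactD bM' bjv bMj) (mxactD bM' bj bv) -(mxactA bM' bM bj) E2 mxact_1 in N3.
exists (vadd (mxact M' (ev j)) (ev j)); split.
- by apply: (vbnd_finsupp (m := n)) => k Hk; rewrite /vadd (mxact_vbnd bM' bj) // bj // addr0.
- have -> : vadd (mxact M' (ev j)) (ev j) = vadd (mxact M' v) (vadd (vadd (mxact M' (ev j)) (mxact M' v)) (ev j)); last exact: N3.
  apply/funext => k; rewrite /vadd.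
  exact: F2_c1.
- apply/eqP => E; apply: Hij.
  have E' : mxact M' (ev j) = ev j.
    apply/funext => k; apply: F2_add_eq0; move/(congr1 (fun f => f k)): E; by [].
  have := mxactA bM bM' bj; rewrite E1 mxact_1 E' mxact_ev => /(congr1 (fun f => f i0)) /= <-.
  by rewrite /ev mx1E.
Qed.

Ltac elim_neq := repeat match goal with
 | H : is_true (?x != ?y) |- context[?x == ?y] => rewrite (negbTE H)
 | H : is_true (?x != ?y) |- context[?y == ?x] => rewrite (eq_sym y x) (negbTE H)
 end; rewrite ?eqxx.

Ltac split_eqs := repeat (match goal with
 | |- context[(?x == ?y :> nat)] =>
     let E := fresh "E" in case: (eqVneq x y) => E; [subst; elim_neq | elim_neq]
 end).

Ltac f2_fin := split_eqs; try (apply/val_inj; done).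

Lemma rowbnd m A i k : bnd m A -> (maxn m i.+1 <= k)%N -> A i k = 0.
Proof.
move=> H Hk; rewrite H ?mx1_neq //.
  by rewrite neq_ltn (leq_trans (leq_maxr _ _) Hk).
by right; exact: leq_trans (leq_maxl _ _) Hk.
Qed.

Lemma mxmul_addr1 n A B w q : bnd n A -> bnd n B -> vbnd n w ->
  mxmul A (fun i j => B i j + w i * (j == q)%:R) =
  fun i j => mxmul A B i j + mxact A w i * (j == q)%:R.
Proof.
move=> HA HB Hw; apply/funext => i; apply/funext => j; rewrite /mxmul /mxact.
rewrite !(fsum_bound (m := maxn n i.+1)); first last.
- by move=> k Hk; rewrite (rowbnd HA Hk) mul0r.
- by move=> k Hk; rewrite (rowbnd HA Hk) mul0r.
- by move=> k Hk; rewrite (rowbnd HA Hk) mul0r.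
rewrite mulr_suml -big_split /=; apply: eq_bigr => k _.
by rewrite mulrDr mulrA.
Qed.

Lemma F2_neq_add (x y : F2) : x <> y -> x + y = 1.
Proof. by case: (F2_01 x) => ->; case: (F2_01 y) => -> //; move=> _; apply/val_inj. Qed.

Lemma N_rank1 (N : set Gt) (HN : normal_subgroup N) M :
  N (M, v0) -> M <> mx1 -> exists u q t, [/\ N (tv u q, v0), vbnd q u & u t = 1].
Proof.
move=> NM /neq_mx1 [i0 [p Hip]].
have HNc := HN; case: HNc => Nsub Ne Nmul Ninv Nconj.
have [HG _] := Nsub _ NM; rewrite /= in HG.
have [m [M' [HM HM' E1 E2]]] := GLinf_bnd HG.
have pm : (p < m)%N.
  rewrite ltnNge; apply/negP => h; apply: Hip; apply: HM; by right.
pose q := m; pose T := tv (ev p) q.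
have Hpq : ev p q = 0 by apply: ev_neq; rewrite neq_ltn pm.
have HT : inG (T, v0).
  by apply: (inG_tv (m := q.+1)) => //; apply: (vbnd_mono _ (@ev_vbnd p)) => //; rewrite ltnS ltnW.
have HTT : Gmul (T, v0) (T, v0) = Ge by rewrite /Gmul /= tv_invol // mxact_0 vaddvv.
have NM' : N (M', v0).
  apply: Ninv NM _ _; first exact: inG_M0 (conj (bnd_finitary HM') (ex_intro _ M (conj (bnd_finitary HM) (conj E2 E1)))).
  by rewrite /Gmul /= E1 mxact_0 vaddvv.
have := Nconj _ _ _ NM' HT HT HTT; rewrite /Gmul /= !mxact_0 !vaddvv => N2.
have := Nmul _ _ NM N2; rewrite /Gmul /= mxact_0 vaddvv => N3.
pose u := fun i => M i p + ev p i.
exists u, q, i0; split.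
- move: N3; rewrite tvL tvR.
  have -> : (fun i j => M' i j + ev p i * M' q j + (M' i p + ev p i * M' q p) * (j == q)%:R)
     = (fun i j => M' i j + (vadd (ev p) (mxact M' (ev p))) i * (j == q)%:R).
    apply/funext => i; apply/funext => j.
    have Mq k : M' q k = mx1 q k by apply: HM'; left.
    rewrite !Mq mxact_ev /vadd [mx1 q p]mx1_neq; last by rewrite neq_ltn pm orbT.
    by rewrite mulr0 addr0 mx1E eq_sym -addrA -mulrDl addrC.
  have bw : vbnd m (vadd (ev p) (mxact M' (ev p))).
    move=> k Hk; rewrite /vadd (mxact_vbnd HM' (vbnd_mono pm (@ev_vbnd p))) // addr0.
    by apply: (vbnd_mono pm (@ev_vbnd p)).
  rewrite (mxmul_addr1 _ HM HM' bw) E1.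
  rewrite (mxactD HM (vbnd_mono pm (@ev_vbnd p)) (mxact_vbnd HM' (vbnd_mono pm (@ev_vbnd p)))).
  rewrite -(mxactA HM HM' (vbnd_mono pm (@ev_vbnd p))) E1 mxact_1 mxact_ev.
  by [].
- move=> k Hk; rewrite /u (vbnd_mono pm (@ev_vbnd p)) // addr0.
  rewrite HM ?mx1_neq //; last by left.
  by rewrite neq_ltn (leq_trans pm Hk) orbT.
- by rewrite /u; apply: F2_neq_add; rewrite /ev -mx1E.
Qed.

Lemma vbnd_lt m u t : vbnd m u -> u t = 1 -> (t < m)%N.
Proof.
move=> H ut; rewrite ltnNge; apply/negP => h; move: ut; rewrite H //.
Qed.

Lemma N_elem (N : set Gt) (HN : normal_subgroup N) u q t :
  N (tv u q, v0) -> vbnd q u -> u t = 1 -> N (tv (ev q.+1) q, v0).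
Proof.
move=> NC Hu ut.
have HNc := HN; case: HNc => Nsub Ne Nmul Ninv Nconj.
have tq := vbnd_lt Hu ut.
pose s := q.+1.
have st : s != t by rewrite neq_ltn (ltn_trans tq (ltnSn q)) orbT.
have sq : s != q by rewrite neq_ltn ltnSn orbT.
have tq' : t != q by rewrite neq_ltn tq.
have uq : u q = 0 by apply: Hu.
pose T2 := tv (ev s) t.
have HT : inG (T2, v0).
  apply: (inG_tv (m := s.+1)); first exact: (@ev_vbnd s).
    by rewrite ltnS ltnW // ltnW.
  exact: ev_neq.
have HTT : Gmul (T2, v0) (T2, v0) = Ge by rewrite /Gmul /= tv_invol ?ev_neq // mxact_0 vaddvv.
have := Nconj _ _ _ NC HT HT HTT; rewrite /Gmul /= !mxact_0 !vaddvv => N4.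
have ED : mxmul (mxmul T2 (tv u q)) T2 = tv (vadd u (ev s)) q.
  rewrite /T2 tvL tvR; apply/funext => i; apply/funext => j.
  rewrite /tv /vadd ut /ev !mx1E; elim_neq.
  by case: (F2_01 (u i)) => ->; f2_fin.
rewrite ED in N4.
have := Nmul _ _ NC N4; rewrite /Gmul /= mxact_0 vaddvv.
have -> : mxmul (tv u q) (tv (vadd u (ev s)) q) = tv (ev s) q; last by [].
rewrite tvL; apply/funext => i; apply/funext => j.
rewrite /tv /vadd uq /ev !mx1E; elim_neq.
by case: (F2_01 (u i)) => ->; f2_fin.
Qed.

Lemma inG_el a b : a != b -> inG (tv (ev a) b, v0).
Proof.
move=> ab; apply: (inG_tv (m := (maxn a b).+1)).
- have Hle : (a.+1 <= (maxn a b).+1)%N by rewrite ltnS leq_maxl.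
  exact: (vbnd_mono Hle (@ev_vbnd a)).
- by rewrite ltnS leq_maxr.
- exact: ev_neq.
Qed.

Lemma el_sq a b : a != b -> Gmul (tv (ev a) b, v0) (tv (ev a) b, v0) = Ge.
Proof. by move=> ab; rewrite /Gmul /= tv_invol ?ev_neq // mxact_0 vaddvv. Qed.

Lemma Tmove1 (N : set Gt) (HN : normal_subgroup N) a b c :
  N (tv (ev a) b, v0) -> a != b -> c != a -> c != b -> N (tv (ev a) c, v0).
Proof.
move=> Nab ab ca cb.
have HNc := HN; case: HNc => Nsub Ne Nmul Ninv Nconj.
have bc : b != c by rewrite eq_sym.
have := Nconj _ _ _ Nab (inG_el bc) (inG_el bc) (el_sq bc).
rewrite /Gmul /= !mxact_0 !vaddvv => N1.
have := Nmul _ _ Nab N1; rewrite /Gmul /= mxact_0 vaddvv.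
have -> : mxmul (tv (ev a) b) (mxmul (mxmul (tv (ev b) c) (tv (ev a) b)) (tv (ev b) c)) = tv (ev a) c; last by [].
rewrite tvR tvL tvL; apply/funext => i; apply/funext => j.
by rewrite /tv /ev !mx1E; f2_fin.
Qed.

Lemma Tmove2 (N : set Gt) (HN : normal_subgroup N) a b c :
  N (tv (ev a) b, v0) -> a != b -> c != a -> c != b -> N (tv (ev c) b, v0).
Proof.
move=> Nab ab ca cb.
have HNc := HN; case: HNc => Nsub Ne Nmul Ninv Nconj.
have := Nconj _ _ _ Nab (inG_el ca) (inG_el ca) (el_sq ca).
rewrite /Gmul /= !mxact_0 !vaddvv => N1.
have := Nmul _ _ N1 Nab; rewrite /Gmul /= mxact_0 vaddvv.
have -> : mxmul (mxmul (mxmul (tv (ev c) a) (tv (ev a) b)) (tv (ev c) a)) (tv (ev a) b) = tv (ev c) b; last by [].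
rewrite tvR tvR tvL; apply/funext => i; apply/funext => j.
by rewrite /tv /ev !mx1E; f2_fin.
Qed.

Lemma Tall (N : set Gt) (HN : normal_subgroup N) s q a b :
  N (tv (ev s) q, v0) -> s != q -> a != b -> N (tv (ev a) b, v0).
Proof.
move=> Nsq sq ab.
pose z := (maxn (maxn s q) (maxn a b)).+1.
have lz x : (x <= maxn (maxn s q) (maxn a b))%N -> z != x.
  by move=> h; rewrite neq_ltn ltnS h orbT.
have zs : z != s by apply: lz; rewrite (leq_trans (leq_maxl s q)) ?leq_maxl.
have zq : z != q by apply: lz; rewrite (leq_trans (leq_maxr s q)) ?leq_maxl.
have za : z != a by apply: lz; rewrite (leq_trans (leq_maxl a b)) ?leq_maxr.
have zb : z != b by apply: lz; rewrite (leq_trans (leq_maxr a b)) ?leq_maxr.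
have N1 := Tmove1 HN Nsq sq zs zq.
have sz : s != z by rewrite eq_sym.
have N2 : N (tv (ev a) z, v0).
  case: (eqVneq a s) => [->//|as_].
  apply: (Tmove2 HN N1 sz as_); by rewrite eq_sym.
have az : a != z by rewrite eq_sym.
apply: (Tmove1 HN N2 az); by rewrite eq_sym.
Qed.

Definition linv (A : infmx) := exists B, finitary B /\ mxmul B A = mx1.

Lemma el_bnd m a b : (a < m)%N -> (b < m)%N -> bnd m (tv (ev a) b).
Proof. by move=> am bm; apply: tv_bnd bm; exact: (vbnd_mono am (@ev_vbnd a)). Qed.

Lemma linv_L m A a b : bnd m A -> (a < m)%N -> (b < m)%N -> a != b -> linv A ->
  linv (mxmul (tv (ev a) b) A).
Proof.
move=> HA am bm ab [B [/finitary_bnd [m2 HB] E]].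
have hT := el_bnd am bm.
pose n := maxn m m2.
have bA := bnd_mono (leq_maxl m m2) HA; have bB := bnd_mono (leq_maxr m m2) HB.
have bT := bnd_mono (leq_maxl m m2) hT.
exists (mxmul B (tv (ev a) b)); split; first exact: bnd_finitary (mxmul_bnd bB bT).
rewrite (mxmulA bB bT (mxmul_bnd bT bA)) -(mxmulA bT bT bA) tv_invol ?ev_neq //.
by rewrite mxmul_1l.
Qed.

Lemma linv_R m A a b : bnd m A -> (a < m)%N -> (b < m)%N -> a != b -> linv A ->
  linv (mxmul A (tv (ev a) b)).
Proof.
move=> HA am bm ab [B [/finitary_bnd [m2 HB] E]].
have hT := el_bnd am bm.
have bA := bnd_mono (leq_maxl m m2) HA; have bB := bnd_mono (leq_maxr m m2) HB.
have bT := bnd_mono (leq_maxl m m2) hT.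
exists (mxmul (tv (ev a) b) B); split; first exact: bnd_finitary (mxmul_bnd bT bB).
rewrite (mxmulA bT bB (mxmul_bnd bA bT)) -(mxmulA bB bA bT) E mxmul_1l tv_invol //.
exact: ev_neq.
Qed.

Lemma PL (N : set Gt) (HN : normal_subgroup N) m A a b :
  (forall a b, a != b -> N (tv (ev a) b, v0)) ->
  bnd m A -> (a < m)%N -> (b < m)%N -> a != b -> N (mxmul (tv (ev a) b) A, v0) -> N (A, v0).
Proof.
move=> Htv HA am bm ab NA.
case: HN => _ _ Nmul _ _.
have := Nmul _ _ (Htv _ _ ab) NA; rewrite /Gmul /= mxact_0 vaddvv.
have hT := el_bnd am bm.
by rewrite -(mxmulA hT hT HA) tv_invol ?ev_neq // mxmul_1l.
Qed.

Lemma PR (N : set Gt) (HN : normal_subgroup N) m A a b :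
  (forall a b, a != b -> N (tv (ev a) b, v0)) ->
  bnd m A -> (a < m)%N -> (b < m)%N -> a != b -> N (mxmul A (tv (ev a) b), v0) -> N (A, v0).
Proof.
move=> Htv HA am bm ab NA.
case: HN => _ _ Nmul _ _.
have := Nmul _ _ NA (Htv _ _ ab); rewrite /Gmul /= mxact_0 vaddvv.
have hT := el_bnd am bm.
by rewrite (mxmulA HA hT hT) tv_invol ?ev_neq // mxmul_1r.
Qed.

Lemma RowClear (N : set Gt) (HN : normal_subgroup N) m
  (Htv : forall a b, a != b -> N (tv (ev a) b, v0))
  (IH : forall A, bnd m A -> linv A -> N (A, v0)) k :
  forall A, bnd m.+1 A -> linv A -> (forall i, i != m -> A i m = 0) -> A m m = 1 ->
  (forall j, (k <= j)%N -> (j < m)%N -> A m j = 0) -> N (A, v0).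
Proof.
elim: k => [|k IHk] A HA HL Hcol Hmm Hrow.
  apply: IH HL => i j Hij.
  case: (ltnP m i) => mi; first by apply: HA; left.
  case: (ltnP m j) => mj; first by apply: HA; right.
  case: Hij => [im|jm].
    have -> : i = m by apply/eqP; rewrite eqn_leq mi im.
    case: (eqVneq j m) => [->|jm']; first by rewrite Hmm mx1_eq.
    rewrite Hrow // ?mx1_neq // 1?eq_sym //.
    by rewrite ltn_neqAle jm' mj.
  have -> : j = m by apply/eqP; rewrite eqn_leq mj jm.
  case: (eqVneq i m) => [->|im']; first by rewrite Hmm mx1_eq.
  by rewrite Hcol // mx1_neq.
case: (ltnP k m) => km; last first.
  apply: IHk => // j kj jm; exfalso; move: (leq_trans km kj); by rewrite leqNgt jm.
case: (F2_01 (A m k)) => Amk.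
  apply: IHk => // j kj jm; case: (eqVneq j k) => [->//|jk]; apply: Hrow => //.
  by rewrite ltn_neqAle eq_sym jk kj.
have mk : m != k by rewrite neq_ltn km orbT.
have mlt : (m < m.+1)%N by [].
have klt : (k < m.+1)%N by rewrite ltnS ltnW.
apply: (PR HN Htv HA mlt klt mk).
have HT := el_bnd mlt klt.
apply: IHk.
- exact: mxmul_bnd HA HT.
- exact: (linv_R HA mlt klt mk HL).
- by move=> i im; rewrite tvR /= (negbTE mk) mulr0 addr0 Hcol.
- by rewrite tvR /= (negbTE mk) mulr0 addr0.
- move=> j kj jm; rewrite tvR /=.
  case: (eqVneq j k) => [->|jk]; first by rewrite ?eqxx Amk Hmm; apply/val_inj.
  rewrite mulr0 addr0; apply: Hrow => //.
  by rewrite ltn_neqAle eq_sym jk kj.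
Qed.

Lemma ColClear (N : set Gt) (HN : normal_subgroup N) m
  (Htv : forall a b, a != b -> N (tv (ev a) b, v0))
  (IH : forall A, bnd m A -> linv A -> N (A, v0)) k :
  forall A, bnd m.+1 A -> linv A -> A m m = 1 ->
  (forall i, (k <= i)%N -> (i < m)%N -> A i m = 0) -> N (A, v0).
Proof.
elim: k => [|k IHk] A HA HL Hmm Hcol.
  apply: (RowClear HN Htv IH (k := m)) => //; last first.
    by move=> j mj jm; exfalso; move: (leq_trans jm mj); rewrite ltnn.
  move=> i im; case: (ltnP i m) => h; first exact: Hcol.
  rewrite HA ?mx1_neq //; left; by rewrite ltn_neqAle h eq_sym im.
case: (ltnP k m) => km; last first.
  apply: IHk => // i ki im; exfalso; move: (leq_trans km ki); by rewrite leqNgt im.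
case: (F2_01 (A k m)) => Akm.
  apply: IHk => // i ki im; case: (eqVneq i k) => [->//|ik]; apply: Hcol => //.
  by rewrite ltn_neqAle eq_sym ik ki.
have km' : k != m by rewrite neq_ltn km.
have mlt : (m < m.+1)%N by [].
have klt : (k < m.+1)%N by rewrite ltnS ltnW.
apply: (PL HN Htv HA klt mlt km').
have HT := el_bnd klt mlt.
apply: IHk.
- exact: mxmul_bnd HT HA.
- exact: (linv_L HA klt mlt km' HL).
- by rewrite tvL /= (ev_neq km') mul0r addr0.
- move=> i ki im; rewrite tvL /=.
  case: (eqVneq i k) => [->|ik]; first by rewrite ev_eq Akm Hmm; apply/val_inj.
  have ki' : k != i by rewrite eq_sym.
  rewrite (ev_neq ki') mul0r addr0; apply: Hcol => //.
  by rewrite ltn_neqAle eq_sym ik ki.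
Qed.

Lemma GaussStep (N : set Gt) (HN : normal_subgroup N) m
  (Htv : forall a b, a != b -> N (tv (ev a) b, v0))
  (IH : forall A, bnd m A -> linv A -> N (A, v0)) :
  forall A, bnd m.+1 A -> linv A -> N (A, v0).
Proof.
move=> A HA HL.
case: (F2_01 (A m m)) => Amm; last first.
  apply: (ColClear HN Htv IH (k := m)) => // i mi im.
  by exfalso; move: (leq_trans im mi); rewrite ltnn.
case: (pselect (exists2 b, (b < m)%N & A b m = 1)) => [[b bm Abm]|Hno].
  have mb : m != b by rewrite neq_ltn bm orbT.
  have mlt : (m < m.+1)%N by [].
  have blt : (b < m.+1)%N by rewrite ltnS ltnW.
  apply: (PL HN Htv HA mlt blt mb).
  have HT := el_bnd mlt blt.
  apply: (ColClear HN Htv IH (k := m)).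
  - exact: mxmul_bnd HT HA.
  - exact: (linv_L HA mlt blt mb HL).
  - by rewrite tvL /= ev_eq Amm Abm; apply/val_inj.
  - by move=> i mi im; exfalso; move: (leq_trans im mi); rewrite ltnn.
exfalso.
case: HL => B [_ E].
have Hz : forall k, A k m = 0.
  move=> k; case: (ltngtP k m) => h.
  - case: (F2_01 (A k m)) => // h1; exfalso; apply: Hno; by exists k.
  - by rewrite HA ?mx1_neq //; [rewrite neq_ltn h orbT | left].
  - by rewrite h.
have := congr1 (fun M => M m m) E; rewrite /= mx1_eq /mxmul fsbig1.
  by move/(congr1 val).
by move=> k _; rewrite Hz mulr0.
Qed.

Lemma Gauss (N : set Gt) (HN : normal_subgroup N)
  (Htv : forall a b, a != b -> N (tv (ev a) b, v0)) m :
  forall A, bnd m A -> linv A -> N (A, v0).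
Proof.
elim: m => [|m IH] A HA HL.
  have -> : A = mx1 by apply/funext => i; apply/funext => j; apply: HA; left.
  by case: HN.
exact: (GaussStep HN Htv IH).
Qed.

Lemma N_full (N : set Gt) (HN : normal_subgroup N) M v :
  Vsub `<=` N -> N (M, v) -> M <> mx1 -> inG `<=` N.
Proof.
move=> HV NMv HM.
have HNc := HN; case: HNc => Nsub Ne Nmul Ninv Nconj.
have [_ Hv] := Nsub _ NMv; rewrite /= in Hv.
have Nv : N (mx1, v) by apply: HV; split => //; exact: inG_1v.
have NM0 : N (M, v0).
  by have := Nmul _ _ Nv NMv; rewrite /Gmul /= mxmul_1l mxact_1 vaddvv.
have [u [q [t [NC Hu ut]]]] := N_rank1 HN NM0 HM.
have Nel := N_elem HN NC Hu ut.
have sq : q.+1 != q by rewrite neq_ltn ltnSn orbT.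
have Htv a b : a != b -> N (tv (ev a) b, v0) by move=> ab; exact: (Tall HN Nel sq ab).
move=> [A w] [HA Hw]; rewrite /= in HA Hw.
have [m [A' [bA bA' E1 E2]]] := GLinf_bnd HA.
have NA : N (A, v0).
  apply: (Gauss HN Htv bA); exists A'; split => //; exact: bnd_finitary bA'.
have Nw : N (mx1, w) by apply: HV; split => //; exact: inG_1v.
by have := Nmul _ _ Nw NA; rewrite /Gmul /= mxmul_1l mxact_0 vaddv0.
Qed.

Theorem lemma4p2 (N : set Gt) :
  normal_subgroup N -> N = [set Ge] \/ N = Vsub \/ N = inG.
Proof.
move=> HN.
have HNc := HN; case: HNc => Nsub Ne Nmul Ninv Nconj.
case: (pselect (exists g, N g /\ g <> Ge)) => [[[M v] [Ng gne]] | H]; last first.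
  left; apply/seteqP; split => [x Nx|x ->] //=.
  apply: contrapT => xne; apply: H; by exists x.
have HV : Vsub `<=` N.
  have [_ Hv] := Nsub _ Ng; rewrite /= in Hv.
  case: (pselect (M = mx1)) => [EM|NEM].
    subst M; apply: (N_V HN Hv Ng); apply/eqP => ev0; apply: gne; by rewrite ev0.
  have [w [Hw Nw nz]] := N_vec HN Ng NEM.
  exact: (N_V HN Hw Nw nz).
case: (pselect (exists M v, N (M, v) /\ M <> mx1)) => [[M1 [v1 [N1 H1]]]|H].
  right; right; apply/seteqP; split => //; exact: (N_full HN HV N1 H1).
right; left; apply/seteqP; split => // [[M1 v1]] N1; split; first exact: Nsub.
apply: contrapT => H1; apply: H; by exists M1, v1.
Qed.
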